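(* For the FSPG iterates $(\mathbf{w}^{(k)})$, for every $k\ge0$, $$\Big\|\nabla\sum_{l=1}^L\tilde g_l(\mathbf{w}^{(k+1)},\mu^{(k+2)})-\nabla\sum_{l=1}^L\tilde g_l(\mathbf{w}^{(k)},\mu^{(k+1)})\Big\|_2\le\frac{\lambda_{\max}(\bar{\mathbf{X}}^\top\bar{\mathbf{X}})}{2\mu^{(k+1)}}\|\mathbf{w}^{(k+1)}-\mathbf{w}^{(k)}\|_2+\frac{n\sqrt{\lambda_{\max}(\bar{\mathbf{X}}^\top\bar{\mathbf{X}})}}{2}\cdot\frac{\mu^{(k+1)}-\mu^{(k+2)}}{\mu^{(k+2)}},$$ where $\nabla$ denotes the gradient with respect to $\mathbf{w}$.
   Context: Data: $L$ clients; client $l$ holds $y^{(l)}_1,\dots,y^{(l)}_{M_l}\in\mathbb{R}$ and $\bar{\mathbf{x}}^{(l)}_i=[(\mathbf{x}^{(l)}_i)^\top,1]^\top\in\mathbb{R}^{P+1}$; $n=\sum_l M_l$; $\bar{\mathbf{X}}\in\mathbb{R}^{(P+1)\times n}$ has all $\bar{\mathbf{x}}^{(l)}_i$ as columns; $\lambda_{\max}$ is the largest eigenvalue. Quantile level $\tau\in(0,1)$. Smoothing: $f(r,\mu)=|r|$ if $|r|\ge\mu$, $f(r,\mu)=\frac{r^2}{2\mu}+\frac{\mu}{2}$ if $|r|<\mu$; $\tilde g_l(\mathbf{w},\mu)=\frac12\sum_{i} f(y^{(l)}_i-(\bar{\mathbf{x}}^{(l)}_i)^\top\mathbf{w},\mu)+(\tau-\frac12)\sum_i(y^{(l)}_i-(\bar{\mathbf{x}}^{(l)}_i)^\top\mathbf{w})$.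 Penalty: $\lambda>0$, $P_{\lambda,\gamma}(\mathbf{w})=\sum_{p=1}^{P}g_{\lambda,\gamma}(w_p)$ with $g_{\lambda,\gamma}$ either MCP ($\gamma\ge1$): $\lambda|t|-\frac{t^2}{2\gamma}$ for $|t|\le\gamma\lambda$, $\frac{\gamma\lambda^2}{2}$ otherwise; or SCAD ($\gamma\ge2$): $\lambda|t|$ for $|t|\le\lambda$, $-\frac{t^2-2\gamma\lambda|t|+\lambda^2}{2(\gamma-1)}$ for $\lambda<|t|\le\gamma\lambda$, $\frac{(\gamma+1)\lambda^2}{2}$ for $|t|>\gamma\lambda$. FSPG algorithm: choose $\mathbf{w}^{(0)}\in\mathbb{R}^{P+1}$, $c>0$, $\beta>0$, $d\in(0,1)$; set $\sigma^{(k)}=ck^d$ and $\mu^{(k)}=\beta/k^d$ for $k\ge1$; for $k=0,1,2,\dots$ let $\mathbf{w}^{(k+1)}$ be a minimizer over $\mathbf{w}\in\mathbb{R}^{P+1}$ of $\sum_{l=1}^L\langle\nabla_{\mathbf{w}}\tilde g_l(\mathbf{w}^{(k)},\mu^{(k+1)}),\mathbf{w}-\mathbf{w}^{(k)}\rangle+nP_{\lambda,\gamma}(\mathbf{w})+\frac{\sigma^{(k+1)}}{2}\|\mathbf{w}-\mathbf{w}^{(k)}\|_2^2$. *)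

(* Defs.v *)
From HB Require Import structures.
From mathcomp Require Import all_boot all_order all_algebra.
From mathcomp Require Import all_classical all_reals all_analysis.
Set Implicit Arguments. Unset Strict Implicit. Unset Printing Implicit Defensive.
Import Order.TTheory GRing.Theory Num.Theory.
Import numFieldNormedType.Exports.
Local Open Scope ring_scope.
Local Open Scope classical_set_scope.

Section FSPG.
Variable R : realType.

Definition dotv m (a b : 'rV[R]_m) : R := \sum_(j < m) a 0 j * b 0 j.
Definition norm2 m (a : 'rV[R]_m) : R := Num.sqrt (\sum_(j < m) a 0 j ^+ 2).

Definition grad m (F : 'rV[R]_m -> R) (w : 'rV[R]_m) : 'rV[R]_m :=
  \row_(j < m) ('D_(delta_mx 0 j) F w).

Definition lambda_max m (A : 'M[R]_m) : R := sup [set a : R | eigenvalue A a].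

Definition fsmooth (r mu : R) : R :=
  if mu <= `|r| then `|r| else r ^+ 2 / (2 * mu) + mu / 2.

(* augmented feature vector xbar = [x^T, 1]^T, stored as a row of size P+1;
   the first P coordinates are the features, the last one is the intercept. *)
Definition xbar P (x : 'rV[R]_P) : 'rV[R]_(P + 1) := row_mx x (const_mx 1).

Definition gtilde (tau : R) P Ml (y : 'I_Ml -> R) (x : 'I_Ml -> 'rV[R]_P)
  (w : 'rV[R]_(P + 1)) (mu : R) : R :=
  2^-1 * (\sum_(i < Ml) fsmooth (y i - dotv (xbar (x i)) w) mu)
  + (tau - 2^-1) * \sum_(i < Ml) (y i - dotv (xbar (x i)) w).

Definition Gsum (tau : R) P L (M : 'I_L -> nat) (y : forall l, 'I_(M l) -> R)
  (x : forall l, 'I_(M l) -> 'rV[R]_P) (w : 'rV[R]_(P + 1)) (mu : R) : R :=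
  \sum_(l < L) gtilde tau (y l) (x l) w mu.

(* Xbar: the (P+1) x n matrix whose columns are all the xbar_i^(l);
   columns are indexed by the pairs (l, i) *)
Definition sample_idx L (M : 'I_L -> nat) := {l : 'I_L & 'I_(M l)}.
Definition Xbar P L (M : 'I_L -> nat) (x : forall l, 'I_(M l) -> 'rV[R]_P)
  : 'M[R]_(P + 1, #|{: sample_idx M}|) :=
  \matrix_(j, c) xbar (x (tag (enum_val c)) (tagged (enum_val c))) 0 j.

Definition mcp (lam gam t : R) : R :=
  if `|t| <= gam * lam then lam * `|t| - t ^+ 2 / (2 * gam) else gam * lam ^+ 2 / 2.
Definition scad (lam gam t : R) : R :=
  if `|t| <= lam then lam * `|t|
  else if `|t| <= gam * lam then
    - (t ^+ 2 - 2 * gam * lam * `|t| + lam ^+ 2) / (2 * (gam - 1))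
  else (gam + 1) * lam ^+ 2 / 2.

Inductive penalty_kind := MCP | SCAD.
Definition gpen (k : penalty_kind) := match k with MCP => mcp | SCAD => scad end.
Definition gamma_ok (k : penalty_kind) (gam : R) :=
  match k with MCP => 1 <= gam | SCAD => 2 <= gam end.

(* P_{lambda,gamma}(w) = sum over the P feature coordinates (intercept excluded) *)
Definition Ppen (k : penalty_kind) (lam gam : R) P (w : 'rV[R]_(P + 1)) : R :=
  \sum_(p < P) gpen k lam gam (w 0 (lshift 1 p)).

(* parameter schedules: sigma^(k) = c k^d, mu^(k) = beta / k^d  (k >= 1) *)
Definition sigma_k (c d : R) (k : nat) : R := c * (k%:R `^ d).
Definition mu_k (beta d : R) (k : nat) : R := beta / (k%:R `^ d).

(* FSPG subproblem objective at step k (defining w^(k+1)) *)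
Definition fspg_obj (tau : R) (k : penalty_kind) (lam gam c beta d : R)
  P L (M : 'I_L -> nat) (y : forall l, 'I_(M l) -> R)
  (x : forall l, 'I_(M l) -> 'rV[R]_P) (wk : 'rV[R]_(P + 1)) (it : nat)
  (w : 'rV[R]_(P + 1)) : R :=
  \sum_(l < L) dotv (grad (fun v => gtilde tau (y l) (x l) v (mu_k beta d it.+1)) wk) (w - wk)
  + (\sum_(l < L) M l)%:R * Ppen k lam gam w
  + sigma_k c d it.+1 / 2 * norm2 (w - wk) ^+ 2.

End FSPG.

(* Main.v *)
Require Import Defs.
From HB Require Import structures.
From mathcomp Require Import all_boot all_order all_algebra.
From mathcomp Require Import all_classical all_reals all_analysis.
Import Order.TTheory GRing.Theory Num.Theory.
Import numFieldNormedType.Exports.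
Local Open Scope ring_scope.
From mathcomp Require Import ring lra.

Section S.
Set Implicit Arguments. Unset Strict Implicit.
Variable R : realType.
Definition hp (r mu : R) : R := if mu <= `|r| then (if 0 <= r then 1 else -1) else r / mu.

Lemma huber1 (a b : R) :
  `|fsmooth b 1 - fsmooth a 1 - hp a 1 * (b - a)| <= (b - a) ^+ 2 / 2.
Proof.
rewrite /fsmooth /hp !mulr1 !divr1 ler_norml.
have := sqr_ge0 (b - a); rewrite expr2 => sq.
case: (lerP 0 a) => ha; case: (lerP 0 b) => hb;
  rewrite ?(ger0_norm ha) ?(ltr0_norm ha) ?(ger0_norm hb) ?(ltr0_norm hb);
  case: ifP => h1; case: ifP => h2; rewrite /= ?expr2; apply/andP; split; nra.
Qed.

Lemma fsmooth_scale (mu a : R) : 0 < mu -> fsmooth (mu * a) mu = mu * fsmooth a 1.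
Proof.
move=> mu0; rewrite /fsmooth normrM (gtr0_norm mu0).
rewrite -{1}[mu]mulr1 ler_pM2l //.
case: ifP => _ //; field; rewrite gt_eqF //.
Qed.

Lemma hp_scale (mu a : R) : 0 < mu -> hp (mu * a) mu = hp a 1.
Proof.
move=> mu0; rewrite /hp normrM (gtr0_norm mu0).
rewrite -{1}[mu]mulr1 ler_pM2l // pmulr_rge0 //.
case: ifP => _ //; rewrite divr1; field; rewrite gt_eqF //.
Qed.

Lemma huber_bound (mu r s : R) : 0 < mu ->
  `|fsmooth s mu - fsmooth r mu - hp r mu * (s - r)| <= (s - r) ^+ 2 / (2 * mu).
Proof.
move=> mu0; have mu0' : mu != 0 by rewrite gt_eqF.
have -> : r = mu * (r / mu) by field.
have -> : s = mu * (s / mu) by field.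
set a := r / mu; set b := s / mu.
rewrite !fsmooth_scale // hp_scale //.
have -> : mu * fsmooth b 1 - mu * fsmooth a 1 - hp a 1 * (mu * b - mu * a)
  = mu * (fsmooth b 1 - fsmooth a 1 - hp a 1 * (b - a)) by ring.
have -> : (mu * b - mu * a) ^+ 2 / (2 * mu) = mu * ((b - a) ^+ 2 / 2) by field.
rewrite normrM (gtr0_norm mu0) ler_pM2l //.
exact: huber1.
Qed.

Lemma hp1_lip (a b : R) : `|hp b 1 - hp a 1| <= `|b - a|.
Proof.
rewrite /hp !divr1 ler_norml.
have n1 := ler_norm (b - a); have n2 := ler_norm (a - b); rewrite distrC in n2.
case: (lerP 0 a) => ha; case: (lerP 0 b) => hb;
  rewrite ?(ger0_norm ha) ?(ltr0_norm ha) ?(ger0_norm hb) ?(ltr0_norm hb);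
  case: ifP => h1; case: ifP => h2; rewrite /=;
  apply/andP; split; lra.
Qed.

Lemma hp_lip (mu r s : R) : 0 < mu -> `|hp s mu - hp r mu| <= `|s - r| / mu.
Proof.
move=> mu0; have mu0' : mu != 0 by rewrite gt_eqF.
have -> : r = mu * (r / mu) by field.
have -> : s = mu * (s / mu) by field.
set a := r / mu; set b := s / mu.
rewrite !hp_scale // -mulrBr normrM (gtr0_norm mu0) mulrC mulrA mulVf // mul1r.
exact: hp1_lip.
Qed.

Lemma hp_mu (mu1 mu2 r : R) : 0 < mu2 -> mu2 <= mu1 ->
  `|hp r mu2 - hp r mu1| <= (mu1 - mu2) / mu2.
Proof.
move=> m2 m12; have m1 : 0 < mu1 by lra.
have i1 := m1; rewrite -invr_gt0 in i1.
have i2 := m2; rewrite -invr_gt0 in i2.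
have e1 : mu1 * mu1^-1 = 1 by rewrite mulfV // gt_eqF.
have e2 : mu2 * mu2^-1 = 1 by rewrite mulfV // gt_eqF.
have i12 : mu1^-1 <= mu2^-1 by rewrite lef_pV2 ?posrE.
rewrite /hp.
case: (lerP 0 r) => ha;
  rewrite ?(ger0_norm ha) ?(ltr0_norm ha);
  case: ifPn => h1; case: ifPn => h2; rewrite -?ltNge in h1 h2; rewrite /= ler_norml;
  apply/andP; split; nra.
Qed.
End S.
Unset Implicit Arguments. Set Strict Implicit.

Section S2.
Set Implicit Arguments. Unset Strict Implicit.
Variable R : realType.
Lemma derive_quad m (F : 'rV[R]_m -> R) a v g K :
  (forall h, `|F (h *: v + a) - F a - h * g| <= K * h ^+ 2) -> 'D_v F a = g.
Proof.
move=> H.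
have K0 : 0 <= K by have := H 1; rewrite expr1n mulr1; apply: le_trans.
rewrite /derive; apply: cvg_lim => //.
apply/cvgrPdist_lt => e e0.
have Ke : 0 < e / (K + 1) by rewrite divr_gt0 // ltr_wpDl.
near=> h.
have hN0 : h != 0 by near: h; exact: nbhs_dnbhs_neq.
have hs : `|h| < e / (K + 1) by near: h; exact: dnbhs0_lt.
rewrite /= /shift.
have -> : g - h^-1 *: (F (h *: v + a) - F a) = - h^-1 * (F (h *: v + a) - F a - h * g).
  by rewrite /GRing.scale /=; field.
rewrite normrM normrN normfV ltr_pdivrMl ?normr_gt0 //.
apply: (le_lt_trans (H h)).
rewrite -(real_normK (num_real h)) expr2.
have hp : 0 < `|h| by rewrite normr_gt0.
rewrite ltr_pdivlMr ?ltr_wpDl // in hs.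
nra.
Unshelve. all: by end_near.
Qed.
End S2.
Unset Implicit Arguments. Set Strict Implicit.


Section G.
Variable R : realType.
Variables (L P : nat) (M : 'I_L -> nat)
  (y : forall l, 'I_(M l) -> R) (x : forall l, 'I_(M l) -> 'rV[R]_P) (tau : R).

Local Notation N := #|{: sample_idx M}|.
Definition xb (c : 'I_N) := xbar (x (tag (enum_val c)) (tagged (enum_val c))).
Definition yc (c : 'I_N) := y (tag (enum_val c)) (tagged (enum_val c)).
Definition res (w : 'rV[R]_(P + 1)) c := yc c - dotv (xb c) w.

Lemma sum_enum (F : forall l, 'I_(M l) -> R) :
  \sum_(l < L) \sum_(i < M l) F l i = \sum_(c < N) F (tag (enum_val c)) (tagged (enum_val c)).
Proof.
rewrite (sig_big_dep xpredT (fun _ => xpredT) F) /=.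
by rewrite (big_enum_val (fun p : sample_idx M => F (tag p) (tagged p))).
Qed.

Lemma Gsum_enum w mu : Gsum tau y x w mu =
  \sum_(c < N) (2^-1 * fsmooth (res w c) mu + (tau - 2^-1) * res w c).
Proof.
rewrite /Gsum /gtilde.
under eq_bigr do rewrite !mulr_sumr -big_split.
by rewrite (sum_enum (fun l i => 2^-1 * fsmooth (y l i - dotv (xbar (x l i)) w) mu
   + (tau - 2^-1) * (y l i - dotv (xbar (x l i)) w))).
Qed.

Lemma card_N : (N%:R : R) = (\sum_(l < L) M l)%:R.
Proof.
have := sum_enum (fun _ _ => 1).
rewrite natr_sum sumr_const card_ord => <-.
by apply: eq_bigr => l _; rewrite sumr_const card_ord.
Qed.

Lemma dotvD m (a u v : 'rV[R]_m) : dotv a (u + v) = dotv a u + dotv a v.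
Proof. by rewrite /dotv -big_split; apply: eq_bigr => k _; rewrite mxE mulrDr. Qed.

Lemma dotv_delta m (a : 'rV[R]_m) h j : dotv a (h *: delta_mx 0 j) = h * a 0 j.
Proof.
rewrite /dotv (bigD1 j) //= big1 ?addr0.
  by rewrite !mxE /= (_ : (j == j) = true) ?mulr1 1?mulrC //; apply/eqP.
by move=> k kj; rewrite !mxE (negbTE kj) mulr0 mulr0.
Qed.

Definition gradG w mu : 'rV[R]_(P + 1) :=
  \row_(j < P + 1) \sum_(c < N) (- (2^-1) * hp (res w c) mu - (tau - 2^-1)) * xb c 0 j.

Lemma grad_G w mu : 0 < mu -> grad (fun v => Gsum tau y x v mu) w = gradG w mu.
Proof.
move=> mu0; apply/rowP => j; rewrite !mxE.
apply: (derive_quad (K := \sum_(c < N) (xb c 0 j) ^+ 2 / (4 * mu))) => h.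
rewrite !Gsum_enum mulr_sumr -!sumrB mulr_suml.
apply: (le_trans (ler_norm_sum _ _ _)); apply: ler_sum => c _.
have -> : res (h *: delta_mx 0 j + w) c = res w c - h * xb c 0 j.
  by rewrite /res dotvD dotv_delta; ring.
set r := res w c; set b := xb c 0 j.
have := huber_bound r (r - h * b) mu0.
have -> : 2^-1 * fsmooth (r - h * b) mu + (tau - 2^-1) * (r - h * b) -
  (2^-1 * fsmooth r mu + (tau - 2^-1) * r) - h * ((- 2^-1 * hp r mu - (tau - 2^-1)) * b)
  = 2^-1 * (fsmooth (r - h * b) mu - fsmooth r mu - hp r mu * (r - h * b - r)) by ring.
rewrite normrM ger0_norm; last by rewrite invr_ge0.
move=> H; apply: (le_trans (ler_wpM2l _ H)); first by rewrite invr_ge0.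
rewrite le_eqVlt; apply/orP; left; apply/eqP; field.
by rewrite gt_eqF.
Qed.

End G.


Local Open Scope classical_set_scope.
Section V.
Set Implicit Arguments. Unset Strict Implicit.
Variable R : realType.

Definition sq2 m (u : 'rV[R]_m) := \sum_(j < m) u 0 j ^+ 2.
Definition qf m (A : 'M[R]_m) (u : 'rV[R]_m) := (u *m A *m u^T) 0 0.

Lemma sq2_ge0 m (u : 'rV[R]_m) : 0 <= sq2 u.
Proof. by apply: sumr_ge0 => j _; exact: sqr_ge0. Qed.

Lemma sq2_eq0 m (u : 'rV[R]_m) : sq2 u = 0 -> u = 0.
Proof.
move=> /eqP; rewrite psumr_eq0; last by move=> j _; exact: sqr_ge0.
move=> /allP H; apply/rowP => j; rewrite mxE.
by have := H j (mem_index_enum j); rewrite /= sqrf_eq0 => /eqP.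
Qed.

Lemma dotvE m (u v : 'rV[R]_m) : dotv u v = (u *m v^T) 0 0.
Proof. by rewrite /dotv mxE; apply: eq_bigr => j _; rewrite mxE. Qed.

Lemma sq2E m (u : 'rV[R]_m) : sq2 u = dotv u u.
Proof. by apply: eq_bigr => j _; rewrite expr2. Qed.

Lemma norm2_sq m (u : 'rV[R]_m) : norm2 u ^+ 2 = sq2 u.
Proof. by rewrite /norm2 sqr_sqrtr // sq2_ge0. Qed.

Lemma norm2_ge0 m (u : 'rV[R]_m) : 0 <= norm2 u.
Proof. exact: sqrtr_ge0. Qed.

Lemma cont_sum m k (F : 'I_k -> 'rV[R]_m -> R) :
  (forall i, continuous (F i)) -> continuous (fun u => \sum_(i < k) F i u).
Proof.
move=> H.
suff H2 : forall s : seq 'I_k, continuous (fun u => \sum_(i <- s) F i u) by exact: H2.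
elim => [|a s IH].
  have -> : (fun u => \sum_(i <- [::]) F i u) = cst 0.
    by apply: funext => u; rewrite big_nil.
  exact: cst_continuous.
have -> : (fun u => \sum_(i <- a :: s) F i u) = F a + (fun u => \sum_(i <- s) F i u).
  by apply: funext => u; rewrite big_cons.
move=> u; apply: continuousD; [exact: H | exact: IH].
Qed.

Lemma qf_cont m (A : 'M[R]_m) : continuous (qf A).
Proof.
have -> : qf A = fun u => \sum_(j < m) \sum_(i < m) (u 0 i * A i j) * u 0 j.
  apply: funext => u; rewrite /qf mxE; apply: eq_bigr => j _.
  rewrite !mxE mulr_suml; apply: eq_bigr => i _.
  by [].
apply: cont_sum => j; apply: cont_sum => i u.
apply: (continuousM (s := fun u : 'rV[R]_m => u 0 i * A i j) (t := fun u : 'rV[R]_m => u 0 j)); last exact: coord_continuous.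
apply: (continuousM (s := fun u : 'rV[R]_m => u 0 i) (t := fun _ => A i j)); first exact: coord_continuous.
exact: cst_continuous.
Qed.

Lemma sq2_cont m : continuous (@sq2 m).
Proof.
apply: cont_sum => j u.
by apply: (continuousM (s := fun u : 'rV[R]_m => u 0 j) (t := fun u : 'rV[R]_m => u 0 j)); exact: coord_continuous.
Qed.


Lemma coord_le_sq2 m (u : 'rV[R]_m) j : u 0 j ^+ 2 <= sq2 u.
Proof.
rewrite /sq2 (bigD1 j) //= lerDl; apply: sumr_ge0 => i _; exact: sqr_ge0.
Qed.

Lemma sphere_compact m : compact [set u : 'rV[R]_m | sq2 u = 1].
Proof.
apply: bounded_closed_compact.
  exists 1; split; first exact: num_real.
  move=> M M1 u Su; rewrite /Num.norm /= mx_normrE.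
  apply: bigmax_le => [|ij _]; first by apply: le_trans (ltW M1).
  have := coord_le_sq2 u ij.2; rewrite Su.
  have -> : ij.1 = 0 by rewrite [ij.1]ord1.
  have := real_normK (num_real (u 0 ij.2)).
  have := normr_ge0 (u 0 ij.2).
  rewrite expr2 => a b c. rewrite /= expr2 in b. nra.
apply: (@preimage_closed _ _ (@sq2 m) [set x | x = 1]).
  by move=> u _; exact: sq2_cont.
exact: closed_eq.
Qed.

Lemma sq2Z m k (u : 'rV[R]_m) : sq2 (k *: u) = k ^+ 2 * sq2 u.
Proof.
rewrite /sq2 mulr_sumr; apply: eq_bigr => j _; rewrite mxE; ring.
Qed.

Lemma qfZ m (A : 'M[R]_m) k (u : 'rV[R]_m) : qf A (k *: u) = k ^+ 2 * qf A u.
Proof.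
by rewrite /qf -scalemxAl linearZ -scalemxAr -scalemxAl !mxE mulrA -expr2.
Qed.

Lemma qf0 m (A : 'M[R]_m) : qf A 0 = 0.
Proof. by rewrite /qf mul0mx mul0mx mxE. Qed.

Lemma qfD m (A : 'M[R]_m) (a b : 'rV[R]_m) : A^T = A ->
  qf A (a + b) = qf A a + 2 * (a *m A *m b^T) 0 0 + qf A b.
Proof.
move=> sA.
have e : (b *m A *m a^T) 0 0 = (a *m A *m b^T) 0 0.
  transitivity ((b *m A *m a^T)^T 0 0); first by rewrite [RHS]mxE.
  by rewrite !trmx_mul trmxK sA mulmxA.
have addE : forall X Y : 'M[R]_1, (X + Y) 0 0 = X 0 0 + Y 0 0 by move=> X Y; rewrite mxE.
rewrite /qf raddfD !mulmxDl !mulmxDr !addE e; ring.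
Qed.


Lemma sq2_0 m : sq2 (0 : 'rV[R]_m) = 0.
Proof. by rewrite /sq2 big1 // => j _; rewrite mxE expr0n. Qed.

Lemma entry_scale1 (k : R) (X : 'M[R]_1) : (k *: X) 0 0 = k * X 0 0.
Proof. by rewrite mxE. Qed.

Lemma rayleigh n (A : 'M[R]_n.+1) : A^T = A ->
  exists m, eigenvalue A m /\ forall u, qf A u <= m * sq2 u.
Proof.
move=> sA.
set S := [set u : 'rV[R]_n.+1 | sq2 u = 1]%classic.
have S0 : S !=set0.
  exists (delta_mx 0 0); rewrite /S /= /sq2 (bigD1 0) //= big1 ?addr0.
    by rewrite mxE eqxx /= expr1n.
  by move=> j j0; rewrite mxE (negbTE j0) andbF expr0n.
have [u0 Su0 Hmax] := EVT_max_rV S0 (@sphere_compact n.+1)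
  (continuous_subspaceT (@qf_cont n.+1 A)).
have su0 : sq2 u0 = 1 by move: Su0; rewrite inE.
set m := qf A u0.
have Hle : forall u, qf A u <= m * sq2 u.
  move=> u; have [-> | nz] := eqVneq u 0.
    by rewrite qf0 /sq2 big1 ?mulr0 // => j _; rewrite mxE expr0n.
  have sp : 0 < sq2 u.
    by rewrite lt_def sq2_ge0 andbT; apply/eqP => /sq2_eq0 h; rewrite h eqxx in nz.
  set s := Num.sqrt (sq2 u).
  have s0 : 0 < s by rewrite sqrtr_gt0.
  have ss : s ^+ 2 = sq2 u by rewrite sqr_sqrtr // ltW.
  have hs : s^-1 ^+ 2 * s ^+ 2 = 1 by rewrite -exprMn mulVf ?expr1n // gt_eqF.
  have := Hmax (s^-1 *: u); rewrite qfZ.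
  have -> : (s^-1 *: u \in S) by rewrite inE /S /= sq2Z -ss.
  move=> /(_ isT) H.
  have : s ^+ 2 * (s^-1 ^+ 2 * qf A u) <= s ^+ 2 * m.
    by rewrite ler_pM2l // exprn_gt0.
  by move=> h; rewrite mulrA [s ^+ 2 * _]mulrC hs mul1r ss mulrC in h.
exists m; split => //.
apply/eigenvalueP; exists u0; last first.
  apply/eqP => h; move: su0; rewrite h sq2_0 => /eqP.
  by rewrite eq_sym oner_eq0.
set B := m%:M - A.
have sB : B^T = B by rewrite /B linearB /= tr_scalar_mx sA.
have qB : forall u, qf B u = m * sq2 u - qf A u.
  move=> u; rewrite /qf /B mulmxBr mul_mx_scalar mulmxBl -scalemxAl mxE entry_scale1.
  have oppE : forall X : 'M[R]_1, (- X) 0 0 = - X 0 0 by move=> X; rewrite mxE.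
  by rewrite oppE sq2E dotvE.
have qB0 : forall u, 0 <= qf B u by move=> u; rewrite qB subr_ge0.
set v := u0 *m B.
have qBu0 : qf B u0 = 0 by rewrite qB su0 mulr1 subrr.
have H : forall t, 0 <= 2 * t * sq2 v + t ^+ 2 * qf B v.
  move=> t; have := qB0 (u0 + t *: v); rewrite qfD // qBu0 add0r qfZ.
  by rewrite -/v linearZ /= -scalemxAr entry_scale1 (sq2E v) dotvE mulrA.
have sv0 : sq2 v = 0.
  set c := qf B v; set s := sq2 v.
  have c0 : 0 <= c := qB0 v.
  have s0 : 0 <= s := sq2_ge0 v.
  have c1 : 0 < c + 1 by rewrite ltr_wpDl.
  set t := s / (c + 1).
  have e : t * (c + 1) = s by rewrite /t mulfVK // gt_eqF.
  have t0 : 0 <= t by rewrite divr_ge0 // ltW.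
  have := H (- t); rewrite sqrrN -/c -/s -e.
  have -> : 2 * - t * (t * (c + 1)) + t ^+ 2 * c = - (t ^+ 2 * (c + 2)) by ring.
  rewrite oppr_ge0 => Ht.
  have p : 0 <= t ^+ 2 * (c + 2) by rewrite mulr_ge0 ?sqr_ge0 // addr_ge0.
  have : t ^+ 2 * (c + 2) = 0 by apply/eqP; rewrite eq_le Ht p.
  move/eqP; rewrite mulf_eq0 expf_eq0 /= => /orP [/eqP -> | /eqP h]; first by rewrite mul0r.
  move/eqP: h; rewrite addr_eq0 => /eqP hc.
  by move: c0; rewrite hc oppr_ge0 lern0.
have v0 : v = 0 := sq2_eq0 sv0.
move: v0; rewrite /v /B mulmxBr mul_mx_scalar => /eqP; rewrite subr_eq0 => /eqP <-.
by [].
Qed.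

Lemma sq2_gt0 m (v : 'rV[R]_m) : v != 0 -> 0 < sq2 v.
Proof.
move=> nz; rewrite lt_def sq2_ge0 andbT; apply/eqP => /sq2_eq0 h.
by rewrite h eqxx in nz.
Qed.

Lemma eig_q n (A : 'M[R]_n) a : eigenvalue A a ->
  exists v, qf A v = a * sq2 v /\ 0 < sq2 v.
Proof.
move/eigenvalueP => [v vA vnz]; exists v; split; last exact: sq2_gt0.
by rewrite /qf vA -scalemxAl entry_scale1 sq2E dotvE.
Qed.

Lemma lmax_prop n (A : 'M[R]_n) : A^T = A -> (forall u, 0 <= qf A u) ->
  0 <= lambda_max A /\ forall u, qf A u <= lambda_max A * sq2 u.
Proof.
case: n A => [|n] A sA psd.
  have E : [set a | eigenvalue A a] = set0.
    apply/seteqP; split => a //=.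
    by move/eigenvalueP => [v _]; rewrite (thinmx0 v) eqxx.
  rewrite /lambda_max E sup0; split => // u.
  by rewrite (thinmx0 u) qf0 mul0r.
have [m [em Hm]] := rayleigh sA.
have ub : forall a, eigenvalue A a -> a <= m.
  move=> a /eig_q [v [qv sv]]; have := Hm v; rewrite qv.
  by rewrite ler_pM2r.
have Lm : lambda_max A = m.
  apply/le_anti/andP; split.
    by apply: ge_sup; [exists m | move=> a; exact: ub].
  apply: sup_upper_bound => //; split; first by exists m.
  by exists m => a; exact: ub.
rewrite Lm; split => //.
have [v [qv sv]] := eig_q em.
by have := psd v; rewrite qv pmulr_lge0.
Qed.

Lemma sq2_lin m (a b : 'rV[R]_m) t :
  sq2 (a + t *: b) = sq2 a + 2 * t * dotv a b + t ^+ 2 * sq2 b.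
Proof.
rewrite /sq2 /dotv !mulr_sumr -!big_split; apply: eq_bigr => j _.
rewrite !mxE /=; ring.
Qed.

Lemma CS_sq m (a b : 'rV[R]_m) : dotv a b ^+ 2 <= sq2 a * sq2 b.
Proof.
have [b0 | nz] := eqVneq b 0.
  by rewrite b0 sq2_0 mulr0 /dotv big1 ?expr0n // => j _; rewrite mxE mulr0.
have sb := sq2_gt0 nz.
have := sq2_ge0 (a + (- (dotv a b / sq2 b)) *: b); rewrite sq2_lin.
set p := dotv a b; set q := sq2 b; set r := sq2 a.
have -> : r + 2 * - (p / q) * p + (- (p / q)) ^+ 2 * q = r - p ^+ 2 / q.
  by field; rewrite gt_eqF.
rewrite subr_ge0 ler_pdivrMr //.
Qed.

Lemma CS m (a b : 'rV[R]_m) : dotv a b <= norm2 a * norm2 b.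
Proof.
apply: (le_trans (ler_norm _)).
rewrite -sqrtr_sqr /norm2 -sqrtrM ?sq2_ge0 //.
exact/ler_wsqrtr/CS_sq.
Qed.

Lemma norm2_sqrt m (a : 'rV[R]_m) : norm2 a = Num.sqrt (sq2 a).
Proof. by []. Qed.

Lemma norm2D m (a b : 'rV[R]_m) : norm2 (a + b) <= norm2 a + norm2 b.
Proof.
rewrite -[X in _ <= X]ger0_norm ?addr_ge0 ?norm2_ge0 // -sqrtr_sqr.
rewrite [norm2 (a + b)]norm2_sqrt; apply: ler_wsqrtr.
have := sq2_lin a b 1; rewrite scale1r => ->.
rewrite expr1n mul1r mulr1 sqrrD !norm2_sq.
rewrite lerD2r lerD2l mulr2n; have := CS a b; lra.
Qed.

Lemma norm2Z m k (a : 'rV[R]_m) : norm2 (k *: a) = `|k| * norm2 a.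
Proof. by rewrite !norm2_sqrt sq2Z sqrtrM ?sqr_ge0 // sqrtr_sqr. Qed.

Lemma norm2_mono m (a b : 'rV[R]_m) : (forall j, `|a 0 j| <= `|b 0 j|) -> norm2 a <= norm2 b.
Proof.
move=> H; rewrite !norm2_sqrt; apply: ler_wsqrtr; apply: ler_sum => j _.
rewrite -(real_normK (num_real (a 0 j))) -(real_normK (num_real (b 0 j))).
by rewrite ler_sqr ?nnegrE ?normr_ge0.
Qed.

Lemma norm2_bound m (a : 'rV[R]_m) dl : (forall j, `|a 0 j| <= dl) -> norm2 a <= m%:R * dl.
Proof.
case: m a => [|m] a H.
  by rewrite mul0r /norm2 big_ord0 sqrtr0.
have dl0 : 0 <= dl by apply: le_trans (H 0).
have : sq2 a <= (m.+1)%:R * dl ^+ 2.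
  have -> : (m.+1)%:R * dl ^+ 2 = \sum_(j < m.+1) dl ^+ 2 by rewrite sumr_const card_ord mulr_natl.
  rewrite /sq2; apply: ler_sum => j _.
  rewrite -(real_normK (num_real (a 0 j))) ler_sqr ?nnegrE ?normr_ge0 //.
move=> /ler_wsqrtr; rewrite -norm2_sqrt sqrtrM ?ler0n // sqrtr_sqr ger0_norm // => h.
apply: le_trans h _; apply: ler_wpM2r => //.
set s := Num.sqrt (m.+1)%:R.
have s0 : 0 <= s := sqrtr_ge0 _.
have ss : s * s = (m.+1)%:R by rewrite -expr2 sqr_sqrtr ?ler0n.
have : 1 <= (m.+1)%:R :> R by rewrite ler1n.
nra.
Qed.

End V.
Unset Implicit Arguments. Set Strict Implicit.
Local Close Scope classical_set_scope.


Section H.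
Variable R : realType.
Variables (L P : nat) (M : 'I_L -> nat)
  (y : forall l, 'I_(M l) -> R) (x : forall l, 'I_(M l) -> 'rV[R]_P) (tau : R).

Local Notation N := #|{: sample_idx M}|.
Local Notation X := (Xbar x).
Local Notation lmax := (lambda_max (X^T *m X)).
Local Notation xb := (@xb R L P M x).
Local Notation res := (@res R L P M y x).
Local Notation gradG := (@gradG R L P M y x tau).

Lemma Xbar_entry j c : X j c = xb c 0 j.
Proof. by rewrite mxE. Qed.

Lemma lmax_props : 0 <= lmax /\ forall u, qf (X^T *m X) u <= lmax * sq2 u.
Proof.
have qE : forall u, qf (X^T *m X) u = sq2 (u *m X^T).
  by move=> u; rewrite sq2E dotvE /qf trmx_mul trmxK !mulmxA.
apply: lmax_prop; first by rewrite trmx_mul trmxK.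
by move=> u; rewrite qE sq2_ge0.
Qed.

Lemma normXt u : norm2 (u *m X^T) <= Num.sqrt lmax * norm2 u.
Proof.
have [l0 Hl] := lmax_props.
have qE : sq2 (u *m X^T) = qf (X^T *m X) u.
  by rewrite sq2E dotvE /qf trmx_mul trmxK !mulmxA.
rewrite norm2_sqrt -sqrtrM // qE; apply: ler_wsqrtr; exact: Hl.
Qed.

Lemma normX (D : 'rV[R]_(P + 1)) : norm2 (D *m X) <= Num.sqrt lmax * norm2 D.
Proof.
have e : sq2 (D *m X) = dotv D ((D *m X) *m X^T).
  by rewrite sq2E !dotvE !trmx_mul !trmxK !mulmxA.
have h : norm2 (D *m X) ^+ 2 <= norm2 D * (Num.sqrt lmax * norm2 (D *m X)).
  rewrite norm2_sq e; apply: (le_trans (CS _ _)); apply: ler_wpM2l; first exact: norm2_ge0.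
  exact: normXt.
have := norm2_ge0 (D *m X); have := norm2_ge0 D; have := sqrtr_ge0 lmax.
move: h; set a := norm2 (D *m X); set b := norm2 D; set s := Num.sqrt lmax.
rewrite expr2 => h s0 b0 a0.
have [->|ap] := eqVneq a 0; first by rewrite mulr_ge0.
have ap' : 0 < a by rewrite lt_def ap a0.
by rewrite -(ler_pM2r ap') (le_trans h) // mulrCA mulrA.
Qed.


Lemma gradG_diff w w' mu1 mu2 :
  gradG w' mu2 - gradG w mu1 =
  (- 2^-1) *: ((\row_c (hp (res w' c) mu2 - hp (res w c) mu1)) *m X^T).
Proof.
apply/rowP => j; rewrite !mxE -sumrB mulr_sumr; apply: eq_bigr => c _.
rewrite !mxE. set z := (match fintype.split j with inl j1 => _ | inr j2 => _ end). ring.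
Qed.

Lemma res_diff w w' c : res w' c - res w c = - ((w' - w) *m X) 0 c.
Proof.
rewrite /res /dotv.
transitivity (\sum_j xb c 0 j * w 0 j - \sum_j xb c 0 j * w' 0 j); first ring.
rewrite -sumrB mxE -sumrN; apply: eq_bigr => j _.
rewrite Xbar_entry (_ : (w' - w) 0 j = w' 0 j - w 0 j); last by rewrite !mxE.
ring.
Qed.

Lemma main_ineq w w' mu1 mu2 : 0 < mu2 -> mu2 <= mu1 ->
  norm2 (gradG w' mu2 - gradG w mu1)
  <= lmax / (2 * mu1) * norm2 (w' - w) + N%:R * Num.sqrt lmax / 2 * ((mu1 - mu2) / mu2).
Proof.
move=> m2 m12; have m1 : 0 < mu1 by apply: lt_le_trans m12.
have [l0 _] := lmax_props.
set sl := Num.sqrt lmax.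
have sl0 : 0 <= sl := sqrtr_ge0 _.
have sls : sl * sl = lmax by rewrite -expr2 sqr_sqrtr.
set dl := (mu1 - mu2) / mu2.
set E := \row_c (hp (res w' c) mu2 - hp (res w' c) mu1).
set F := \row_c (hp (res w' c) mu1 - hp (res w c) mu1).
have EF : \row_c (hp (res w' c) mu2 - hp (res w c) mu1) = E + F.
  by apply/rowP => c; rewrite !mxE; ring.
rewrite gradG_diff EF norm2Z normrN ger0_norm ?invr_ge0 //.
have h1 : norm2 ((E + F) *m X^T) <= sl * (norm2 E + norm2 F).
  apply: (le_trans (normXt _)); apply: ler_wpM2l => //; exact: norm2D.
have h2 : norm2 E <= N%:R * dl.
  apply: norm2_bound => c; rewrite mxE; exact: hp_mu.
have im0 : 0 <= mu1^-1 by rewrite invr_ge0 ltW.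
have h3 : norm2 F <= mu1^-1 * (sl * norm2 (w' - w)).
  apply: (@le_trans _ _ (norm2 (mu1^-1 *: ((w' - w) *m X)))).
    apply: norm2_mono => c.
    have -> : F 0 c = hp (res w' c) mu1 - hp (res w c) mu1 by rewrite mxE.
    have -> : (mu1^-1 *: ((w' - w) *m X)) 0 c = mu1^-1 * ((w' - w) *m X) 0 c by rewrite [LHS]mxE.
    apply: (le_trans (hp_lip _ _ m1)).
    by rewrite res_diff normrN normrM (ger0_norm im0) mulrC.
  rewrite norm2Z (ger0_norm im0); apply: ler_wpM2l => //.
  exact: normX.
have h4 : sl * (norm2 E + norm2 F) <= sl * (N%:R * dl + mu1^-1 * (sl * norm2 (w' - w))).
  by apply: ler_wpM2l => //; apply: lerD.
have -> : lmax / (2 * mu1) * norm2 (w' - w) + N%:R * sl / 2 * dl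
  = 2^-1 * (sl * (N%:R * dl + mu1^-1 * (sl * norm2 (w' - w)))).
  by rewrite -sls; field; rewrite gt_eqF.
apply: ler_wpM2l; first by rewrite invr_ge0.
exact: le_trans h1 h4.
Qed.

End H.


Lemma mu_pos (R : realType) (beta d : R) j : 0 < beta -> 0 < mu_k beta d j.+1.
Proof. by move=> b0; rewrite /mu_k divr_gt0 // powR_gt0 // ltr0n. Qed.

Lemma mu_dec (R : realType) (beta d : R) j : 0 < beta -> 0 <= d ->
  mu_k beta d j.+2 <= mu_k beta d j.+1.
Proof.
move=> b0 d0; rewrite /mu_k ler_pM2l // lef_pV2 ?posrE ?powR_gt0 ?ltr0n //.
by apply: ge0_ler_powR => //; rewrite ?nnegrE ?ler0n // ler_nat.
Qed.

Theorem lemma4 (R : realType) (L P : nat) (M : 'I_L -> nat)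
  (y : forall l, 'I_(M l) -> R) (x : forall l, 'I_(M l) -> 'rV[R]_P)
  (tau : R) (Htau : 0 < tau < 1)
  (pk : penalty_kind) (lam gam : R) (Hlam : 0 < lam) (Hgam : gamma_ok pk gam)
  (c beta d : R) (Hc : 0 < c) (Hbeta : 0 < beta) (Hd : 0 < d < 1)
  (w : nat -> 'rV[R]_(P + 1))
  (Hmin : forall (k : nat) (v : 'rV[R]_(P + 1)),
     fspg_obj tau pk lam gam c beta d y x (w k) k (w k.+1)
     <= fspg_obj tau pk lam gam c beta d y x (w k) k v) :
  forall k : nat,
    let n := (\sum_(l < L) M l)%:R in
    let lmax := lambda_max ((Xbar x)^T *m Xbar x) in
    norm2 (grad (fun v => Gsum tau y x v (mu_k beta d k.+2)) (w k.+1)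
           - grad (fun v => Gsum tau y x v (mu_k beta d k.+1)) (w k))
    <= lmax / (2 * mu_k beta d k.+1) * norm2 (w k.+1 - w k)
       + n * Num.sqrt lmax / 2
         * ((mu_k beta d k.+1 - mu_k beta d k.+2) / mu_k beta d k.+2).
Proof.
move=> k; cbv zeta.
have m1 := @mu_pos R beta d k Hbeta.
have m2 := @mu_pos R beta d k.+1 Hbeta.
have d0 : 0 <= d by case/andP: Hd => /ltW.
have m12 := @mu_dec R beta d k Hbeta d0.
rewrite !grad_G // -card_N.
exact: main_ineq.
Qed.
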